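(* For every $N\in\mathbb{N}$, every $f\in\mathcal{E}_N$, every $0<\delta\le1$ and every $\beta\in\mathbb{N}^n$, $$\|\partial_x^\beta f\|_{L^2(\mathbb{R}^n)}\le e^{\frac{e}{2\delta^2}}(2\delta)^{|\beta|}|\beta|!\,e^{\delta^{-1}\sqrt{N}}\|f\|_{L^2(\mathbb{R}^n)}.$$
   Context: The one-dimensional Hermite functions are $\phi_k(x)=\frac{(-1)^k}{\sqrt{2^k k!\sqrt{\pi}}}e^{x^2/2}\frac{d^k}{dx^k}(e^{-x^2})$, $k\in\mathbb{N}$. For $\alpha\in\mathbb{N}^n$, $\Phi_\alpha(x)=\prod_{j=1}^n\phi_{\alpha_j}(x_j)$ and $|\alpha|=\alpha_1+\dots+\alpha_n$. $\mathcal{E}_N=\mathrm{Span}_{\mathbb{C}}\{\Phi_\alpha:|\alpha|\le N\}$; $\partial_x^\beta=\partial_{x_1}^{\beta_1}\cdots\partial_{x_n}^{\beta_n}$. *)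

(* Defs.v *)
From Stdlib Require Export Reals List ClassicalEpsilon Arith Factorial.
Open Scope R_scope.

(** Classical (total) derivative of a real function at a point:
    the value l with derivable_pt_lim f x l if it exists, 0 otherwise. *)
Definition deriv (f : R -> R) (x : R) : R :=
  match excluded_middle_informative (exists l, derivable_pt_lim f x l) with
  | left H => proj1_sig (constructive_indefinite_description _ H)
  | right _ => 0
  end.

Fixpoint nderiv (k : nat) (f : R -> R) : R -> R :=
  match k with
  | O => f
  | S k' => deriv (nderiv k' f)
  end.

Definition hermite (k : nat) (x : R) : R :=
  (-1) ^ k / sqrt (2 ^ k * INR (fact k) * sqrt PI)
  * exp (x ^ 2 / 2) * nderiv k (fun y => exp (- y ^ 2)) x.

(** Points of R^n are x : nat -> R (only coordinates 0..n-1 matter);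
    multi-indices in N^n are a : nat -> nat (only entries 0..n-1 matter). *)

Fixpoint mabs (n : nat) (a : nat -> nat) : nat :=
  match n with
  | O => O
  | S n' => (mabs n' a + a n')%nat
  end.

Fixpoint Phi (n : nat) (a : nat -> nat) (x : nat -> R) : R :=
  match n with
  | O => 1
  | S n' => Phi n' a x * hermite (a n') (x n')
  end.

Definition upd (x : nat -> R) (j : nat) (t : R) : nat -> R :=
  fun i => if Nat.eqb i j then t else x i.

Definition pderiv (j : nat) (F : (nat -> R) -> R) : (nat -> R) -> R :=
  fun x => deriv (fun t => F (upd x j t)) (x j).

Fixpoint pderiv_iter (j k : nat) (F : (nat -> R) -> R) : (nat -> R) -> R :=
  match k with
  | O => F
  | S k' => pderiv j (pderiv_iter j k' F)
  end.

Fixpoint dmulti (n : nat) (b : nat -> nat) (F : (nat -> R) -> R)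
  : (nat -> R) -> R :=
  match n with
  | O => F
  | S n' => dmulti n' b (pderiv_iter n' (b n') F)
  end.

(** Classical Riemann integral on [a,b] (0 if not Riemann integrable). *)
Definition RI (f : R -> R) (a b : R) : R :=
  match excluded_middle_informative
          (exists r, exists pr : Riemann_integrable f a b, RiemannInt pr = r) with
  | left H => proj1_sig (constructive_indefinite_description _ H)
  | right _ => 0
  end.

(** Classical limit of a real sequence (0 if it does not converge). *)
Definition lim (u : nat -> R) : R :=
  match excluded_middle_informative (exists l, Un_cv u l) with
  | left H => proj1_sig (constructive_indefinite_description _ H)
  | right _ => 0
  end.

Fixpoint box_int (n m : nat) (F : (nat -> R) -> R) (x : nat -> R) : R :=
  match n with
  | O => F x
  | S n' => RI (fun t => box_int n' m F (upd x n' t)) (- INR m) (INR m)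
  end.

(** Integral over R^n of a (nonnegative, continuous) function:
    limit of the integrals over the boxes [-m,m]^n. *)
Definition Lint (n : nat) (F : (nat -> R) -> R) : R :=
  lim (fun m => box_int n m F (fun _ => 0)).

(** L^2(R^n) norm of the complex-valued function u + i v. *)
Definition L2norm (n : nat) (u v : (nat -> R) -> R) : R :=
  sqrt (Lint n (fun x => u x ^ 2 + v x ^ 2)).

(** A finite complex linear combination sum (a + i b) Phi_alpha, given as
    a list of triples ((a, b), alpha); real and imaginary parts. *)
Definition combo_re (n : nat) (l : list (R * R * (nat -> nat))) (x : nat -> R) : R :=
  fold_right (fun p acc => fst (fst p) * Phi n (snd p) x + acc) 0 l.

Definition combo_im (n : nat) (l : list (R * R * (nat -> nat))) (x : nat -> R) : R :=
  fold_right (fun p acc => snd (fst p) * Phi n (snd p) x + acc) 0 l.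

Definition in_EN (n N : nat) (l : list (R * R * (nat -> nat))) : Prop :=
  Forall (fun p => (mabs n (snd p) <= N)%nat) l.

(* Main.v *)
Require Import Defs.
From Stdlib Require Import Reals List.
Open Scope R_scope.
From Stdlib Require Import Lra Lia Bool Factorial.
From Coquelicot Require Import Coquelicot.
From Stdlib Require Import FunctionalExtensionality.
Open Scope R_scope.

Lemma deriv_eq (f : R -> R) x l : derivable_pt_lim f x l -> deriv f x = l.
Proof.
  intros H. unfold deriv.
  destruct (excluded_middle_informative _) as [H1|H1].
  - destruct (constructive_indefinite_description _ _) as [l' Hl']. simpl.
    eapply uniqueness_limite; eauto.
  - exfalso; apply H1; eauto.
Qed.

Lemma deriv_eq' (f : R -> R) x l : is_derive f x l -> deriv f x = l.
Proof. intros H; apply deriv_eq, is_derive_Reals, H. Qed.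

Fixpoint Hp (k : nat) (x : R) : R :=
  match k with
  | O => 1
  | S O => 2 * x
  | S ((S k'') as k') => 2 * x * Hp k' x - 2 * INR k' * Hp k'' x
  end.

Definition dH (k : nat) (x : R) : R :=
  match k with O => 0 | S k' => 2 * INR k * Hp k' x end.

Lemma Hp_rec k x : Hp (S k) x = 2 * x * Hp k x - dH k x.
Proof. destruct k; simpl; [ring|]. reflexivity. Qed.

Lemma Hp_deriv_aux k : (forall x, derivable_pt_lim (Hp k) x (dH k x)) /\
                       (forall x, derivable_pt_lim (Hp (S k)) x (dH (S k) x)).
Proof.
  induction k as [|k [IH1 IH2]].
  - split; intros x; simpl.
    + apply derivable_pt_lim_const.
    + replace (2 * 1 * 1) with (2 * 1) by ring.
      apply (derivable_pt_lim_scal id 2 x 1). apply derivable_pt_lim_id.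
  - split; [exact IH2|]. intros x.
    assert (E : Hp (S (S k)) = fun x => 2 * x * Hp (S k) x - 2 * INR (S k) * Hp k x).
    { apply functional_extensionality; intros y; reflexivity. }
    rewrite E.
    assert (D : derivable_pt_lim (fun x => 2 * x * Hp (S k) x - 2 * INR (S k) * Hp k x) x
                 (2 * 1 * Hp (S k) x + 2 * x * dH (S k) x - 2 * INR (S k) * dH k x)).
    { apply (derivable_pt_lim_minus (fun x => 2 * x * Hp (S k) x) (fun x => 2 * INR (S k) * Hp k x)).
      - apply (derivable_pt_lim_mult (fun x => 2 * x) (Hp (S k))); auto.
        apply (derivable_pt_lim_scal id 2 x 1). apply derivable_pt_lim_id.
      - apply (derivable_pt_lim_scal (Hp k) (2 * INR (S k)) x). apply IH1. }
    replace (dH (S (S k)) x) with (2 * 1 * Hp (S k) x + 2 * x * dH (S k) x - 2 * INR (S k) * dH k x).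
    exact D.
    change (dH (S (S k)) x) with (2 * INR (S (S k)) * Hp (S k) x).
    change (dH (S k) x) with (2 * INR (S k) * Hp k x).
    rewrite (Hp_rec k). rewrite !S_INR. ring.
Qed.

Lemma Hp_deriv k x : derivable_pt_lim (Hp k) x (dH k x).
Proof. apply Hp_deriv_aux. Qed.

Lemma nderiv_gauss k :
  nderiv k (fun y => exp (- y ^ 2)) = fun y => (-1) ^ k * Hp k y * exp (- y ^ 2).
Proof.
  induction k as [|k IH].
  - apply functional_extensionality; intros; simpl; ring.
  - change (nderiv (S k) (fun y => exp (- y ^ 2))) with (deriv (nderiv k (fun y => exp (- y ^ 2)))).
    rewrite IH. apply functional_extensionality; intros y.
    apply deriv_eq'.
    apply is_derive_Reals.
    assert (D1 : derivable_pt_lim (fun y => exp (- y ^ 2)) y (- (2 * y) * exp (- y ^ 2))).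
    { apply is_derive_Reals. auto_derive; auto. replace (- (y * (y * 1))) with (- y^2) by ring. ring. }
    assert (D2 := derivable_pt_lim_mult (fun y => (-1) ^ k * Hp k y) (fun y => exp (- y ^ 2)) y
                  ((-1)^k * dH k y) _ (derivable_pt_lim_scal (Hp k) ((-1)^k) y _ (Hp_deriv k y)) D1).
    unfold mult_fct in D2.
    replace ((-1) ^ S k * Hp (S k) y * exp (- y ^ 2)) with
      ((-1) ^ k * dH k y * exp (- y ^ 2) + (-1) ^ k * Hp k y * (- (2 * y) * exp (- y ^ 2))).
    exact D2.
    rewrite Hp_rec. simpl. ring.
Qed.

Definition sk (k : nat) : R := sqrt (2 ^ k * INR (fact k) * sqrt PI).

Lemma sk_pos k : 0 < sk k.
Proof.
  unfold sk. apply sqrt_lt_R0. apply Rmult_lt_0_compat.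
  apply Rmult_lt_0_compat. apply pow_lt; lra. apply lt_0_INR, lt_O_fact.
  apply sqrt_lt_R0, PI_RGT_0.
Qed.

Lemma hermite_eq k x : hermite k x = Hp k x * exp (- x ^ 2 / 2) / sk k.
Proof.
  unfold hermite. rewrite nderiv_gauss. fold (sk k).
  assert (E : exp (x ^ 2 / 2) * exp (- x ^ 2) = exp (- x ^ 2 / 2)).
  { rewrite <- exp_plus. f_equal. field. }
  assert (S : (-1) ^ k * (-1) ^ k = 1).
  { rewrite <- Rpow_mult_distr. replace (-1 * -1) with 1 by ring. apply pow1. }
  assert (P := sk_pos k).
  match goal with |- ?L = _ => replace L with (((-1)^k*(-1)^k) * (Hp k x * (exp (x^2/2) * exp(-x^2))) / sk k) by (field; lra) end.
  rewrite S, E. field. lra.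
Qed.

Definition cm (k : nat) : R := sqrt (INR k / 2).
Definition cp (k : nat) : R := sqrt (INR (S k) / 2).

Lemma cp_pos k : 0 < cp k.
Proof. unfold cp. apply sqrt_lt_R0. rewrite S_INR. pose proof (pos_INR k). lra. Qed.

Lemma cm_ge0 k : 0 <= cm k.
Proof. apply sqrt_pos. Qed.

Lemma cm_S k : cm (S k) = cp k.
Proof. reflexivity. Qed.

Lemma cm_sq k : cm k * cm k = INR k / 2.
Proof. unfold cm. apply sqrt_sqrt. pose proof (pos_INR k); lra. Qed.

Lemma cp_sq k : cp k * cp k = INR (S k) / 2.
Proof. unfold cp. apply sqrt_sqrt. pose proof (pos_INR (S k)); lra. Qed.

Lemma sk_S k : sk (S k) = sk k * (2 * cp k).
Proof.
  unfold sk. 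
  replace (2 * cp k) with (sqrt (2 * INR (S k))).
  - rewrite <- sqrt_mult.
    + f_equal. rewrite fact_simpl, mult_INR. simpl. ring.
    + pose proof (sk_pos k) as H. unfold sk in H.
      left. apply Rmult_lt_0_compat. apply Rmult_lt_0_compat. apply pow_lt; lra. apply lt_0_INR, lt_O_fact.
      apply sqrt_lt_R0, PI_RGT_0.
    + pose proof (pos_INR (S k)); lra.
  - unfold cp. replace (2 * INR (S k)) with (2 * 2 * (INR (S k) / 2)) by field.
    rewrite sqrt_mult; try lra. rewrite sqrt_square; lra.
    pose proof (pos_INR (S k)); lra.
Qed.

Definition e2 (x : R) := exp (- x ^ 2 / 2).

Lemma key_p k x : Hp (S k) x / 2 * e2 x / sk k = cp k * hermite (S k) x.
Proof.
  rewrite hermite_eq, sk_S. fold (e2 x). pose proof (sk_pos k). pose proof (cp_pos k).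
  field. lra.
Qed.

Lemma key_m k x : dH k x / 2 * e2 x / sk k = cm k * hermite (pred k) x.
Proof.
  destruct k as [|k].
  - unfold cm; simpl. replace (0/2) with 0 by field. rewrite sqrt_0. field. pose proof (sk_pos 0). lra.
  - simpl pred. rewrite hermite_eq, sk_S. fold (e2 x). unfold dH.
    pose proof (sk_pos k). pose proof (cp_pos k).
    rewrite cm_S. replace (INR (S k)) with (2 * (cp k * cp k)) by (rewrite cp_sq; field).
    field. lra.
Qed.

Lemma x_hermite k x : x * hermite k x = cm k * hermite (pred k) x + cp k * hermite (S k) x.
Proof.
  rewrite <- key_p, <- key_m, hermite_eq. fold (e2 x). rewrite Hp_rec.
  pose proof (sk_pos k). field. lra.
Qed.

Lemma e2_deriv x : derivable_pt_lim e2 x (- x * e2 x).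
Proof.
  apply is_derive_Reals. unfold e2. auto_derive; auto.
  replace (- (x * (x * 1)) * / 2) with (- x ^ 2 / 2) by (simpl; field). field.
Qed.

Lemma hermite_deriv k x :
  derivable_pt_lim (hermite k) x (cm k * hermite (pred k) x - cp k * hermite (S k) x).
Proof.
  assert (E : hermite k = fun x => / sk k * (Hp k x * e2 x)).
  { apply functional_extensionality; intros y. rewrite hermite_eq. fold (e2 y).
    pose proof (sk_pos k). field. lra. }
  rewrite E.
  replace (cm k * hermite (pred k) x - cp k * hermite (S k) x)
    with (/ sk k * (dH k x * e2 x + Hp k x * (- x * e2 x))).
  - apply (derivable_pt_lim_scal (fun x => Hp k x * e2 x)).
    apply (derivable_pt_lim_mult (Hp k) e2). apply Hp_deriv. apply e2_deriv.
  - rewrite <- key_p, <- key_m. rewrite Hp_rec. pose proof (sk_pos k). field. lra.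
Qed.

Lemma hermite_cont k x : continuous (hermite k) x.
Proof.
  apply continuity_pt_filterlim. apply derivable_continuous_pt.
  exists (cm k * hermite (pred k) x - cp k * hermite (S k) x). apply hermite_deriv.
Qed.

Lemma RI_RInt f a b : ex_RInt f a b -> RI f a b = RInt f a b.
Proof.
  intros H. unfold RI.
  destruct (excluded_middle_informative _) as [H1|H1].
  - destruct (constructive_indefinite_description _ _) as [r [pr Hr]]. simpl.
    rewrite <- Hr. symmetry. apply RInt_Reals.
  - exfalso; apply H1. exists (RInt f a b). exists (ex_RInt_Reals_0 _ _ _ H).
    symmetry; apply RInt_Reals.
Qed.

Lemma exp_pow n z : exp (INR n * z) = exp z ^ n.
Proof.
  induction n as [|n IH]. simpl. rewrite Rmult_0_l; apply exp_0.
  rewrite S_INR, Rmult_plus_distr_r, Rmult_1_l, exp_plus, IH. cbn [pow]. ring.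
Qed.

Lemma le_exp z : z <= exp z.
Proof.
  destruct (Req_dec z 0) as [->|H]. rewrite exp_0; lra.
  pose proof (exp_ineq1 z H). lra.
Qed.

Lemma pow_le_exp n y : 0 <= y -> y ^ (S n) <= INR (S n) ^ (S n) * exp y.
Proof.
  intros Hy. set (c := INR (S n)). assert (Hc : 0 < c) by (apply lt_0_INR; lia).
  replace y with (c * (y / c)) at 1 by (field; lra).
  replace (exp y) with (exp (y / c) ^ (S n)).
  - rewrite Rpow_mult_distr. apply Rmult_le_compat_l. apply pow_le; lra.
    apply pow_incr. split. apply Rdiv_le_0_compat; lra. apply le_exp.
  - rewrite <- exp_pow. f_equal. unfold c in *. field. lra.
Qed.

Lemma abs_le_1sq x : Rabs x <= 1 + x ^ 2.
Proof.
  pose proof (pow2_ge_0 (x - 1/2)). pose proof (pow2_ge_0 (x + 1/2)).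
  destruct (Rle_dec 0 x). rewrite Rabs_right by lra. simpl in *. nra.
  rewrite Rabs_left by lra. simpl in *. nra.
Qed.

Lemma Hp_bound k : exists B, 0 <= B /\ forall x, Rabs (Hp k x) <= B * (1 + x^2) ^ k.
Proof.
  assert (H : forall k, (exists B, 0 <= B /\ forall x, Rabs (Hp k x) <= B * (1 + x^2) ^ k) /\
                        (exists B, 0 <= B /\ forall x, Rabs (Hp (S k) x) <= B * (1 + x^2) ^ (S k))).
  { clear k. intros k. induction k as [|k IH].
    - split.
      + exists 1. split; [lra|]. intros x; simpl. rewrite Rabs_R1; lra.
      + exists 2. split; [lra|]. intros x; simpl. rewrite Rabs_mult, Rabs_right by lra.
        apply Rmult_le_compat_l; [lra|]. rewrite Rmult_1_r. apply abs_le_1sq.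
    - destruct IH as [[B0 [HB0 H0]] [B1 [HB1 H1]]]. split.
      + exists B1; split; auto.
      + exists (2 * B1 + 2 * INR (S k) * B0). split.
        { pose proof (pos_INR (S k)). nra. }
        intros x. change (Hp (S (S k)) x) with (2 * x * Hp (S k) x - 2 * INR (S k) * Hp k x).
        assert (Hy : 1 <= 1 + x^2) by (pose proof (pow2_ge_0 x); lra).
        assert (Hx : Rabs x <= 1 + x ^ 2) by apply abs_le_1sq.
        set (y := 1 + x^2) in *.
        assert (P0 : 0 <= y ^ k) by (apply pow_le; lra).
        assert (P1 : y ^ k <= y ^ (S (S k))).
        { simpl. rewrite <- Rmult_assoc. rewrite <- (Rmult_1_l (y^k)) at 1.
          apply Rmult_le_compat_r; auto. nra. }
        pose proof (H0 x). pose proof (H1 x). pose proof (Rabs_pos (Hp k x)).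
        pose proof (Rabs_pos (Hp (S k) x)). pose proof (pos_INR (S k)).
        eapply Rle_trans. apply Rabs_triang. rewrite Rabs_Ropp, !Rabs_mult.
        rewrite (Rabs_right 2) by lra. rewrite (Rabs_right (INR (S k))) by lra.
        assert (A1 : Rabs x * Rabs (Hp (S k) x) <= B1 * y ^ (S (S k))).
        { replace (y ^ (S (S k))) with (y * y ^ (S k)) by reflexivity.
          pose proof (Rabs_pos x). 
          apply Rle_trans with (y * (B1 * y ^ S k)). apply Rmult_le_compat; auto. nra. }
        assert (A2 : Rabs (Hp k x) <= B0 * y ^ (S (S k))).
        { apply Rle_trans with (B0 * y ^ k); auto. apply Rmult_le_compat_l; auto. }
        nra. }
  apply H.
Qed.

Definition hh (a b : nat) (t : R) : R := hermite a t * hermite b t.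

Lemma hh_cont a b x : continuous (hh a b) x.
Proof.
  unfold hh. apply (continuous_mult (fun t => hermite a t) (fun t => hermite b t)); apply hermite_cont.
Qed.

Lemma hh_exRInt a b u v : ex_RInt (hh a b) u v.
Proof. apply (ex_RInt_continuous (V:=R_CompleteNormedModule)). intros; apply hh_cont. Qed.

Lemma e2_sq x : e2 x * e2 x = exp (- x ^ 2).
Proof. unfold e2. rewrite <- exp_plus. f_equal. field. Qed.

Lemma hh_decay a b : exists C, 0 <= C /\ forall x, Rabs (hh a b x) <= C / (1 + x ^ 2).
Proof.
  destruct (Hp_bound a) as [Ba [HBa Ha]]. destruct (Hp_bound b) as [Bb [HBb Hb]].
  set (K := (a + b)%nat).
  exists (Ba * Bb / (sk a * sk b) * (INR (S K) ^ (S K) * exp 1)).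
  pose proof (sk_pos a). pose proof (sk_pos b).
  assert (Hn : 0 <= INR (S K) ^ S K * exp 1).
  { apply Rmult_le_pos. apply pow_le, pos_INR. left; apply exp_pos. }
  split.
  { apply Rmult_le_pos; auto. apply Rdiv_le_0_compat. nra. nra. }
  intros x. unfold hh. rewrite !hermite_eq. fold (e2 x).
  assert (Hy : 1 <= 1 + x^2) by (pose proof (pow2_ge_0 x); lra).
  set (y := 1 + x ^ 2) in *.
  replace (Hp a x * e2 x / sk a * (Hp b x * e2 x / sk b)) with
     ((Hp a x * Hp b x) / (sk a * sk b) * (e2 x * e2 x)) by (field; lra).
  rewrite e2_sq. rewrite Rabs_mult, (Rabs_right (exp _)) by (left; apply exp_pos).
  rewrite Rabs_div by nra. rewrite (Rabs_right (sk a * sk b)) by nra.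
  rewrite Rabs_mult.
  assert (E1 : Rabs (Hp a x) * Rabs (Hp b x) <= Ba * Bb * y ^ K).
  { unfold K. rewrite pow_add. pose proof (Rabs_pos (Hp a x)). pose proof (Rabs_pos (Hp b x)).
    replace (Ba * Bb * (y ^ a * y ^ b)) with ((Ba * y^a) * (Bb * y^b)) by ring.
    apply Rmult_le_compat; auto. }
  assert (E2 : y ^ K * exp (- x ^ 2) <= INR (S K) ^ S K * exp 1 / y).
  { pose proof (pow_le_exp K y ltac:(lra)).
    assert (Ey : exp y = exp 1 * exp (x ^ 2)) by (unfold y; apply exp_plus).
    rewrite Ey in H1. simpl in H1.
    assert (0 < exp (x^2)) by apply exp_pos.
    assert (exp (- x ^ 2) = / exp (x ^ 2)) by (apply exp_Ropp).
    rewrite H3. apply Rmult_le_reg_r with (y * exp (x ^ 2)). nra.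
    replace (y ^ K * / exp (x ^ 2) * (y * exp (x ^ 2))) with (y * y ^ K) by (field; lra).
    replace (INR (S K) ^ S K * exp 1 / y * (y * exp (x ^ 2))) with (INR (S K) ^ S K * (exp 1 * exp (x ^ 2))) by (field; lra).
    simpl. lra. }
  assert (P := Rmult_le_compat _ _ _ _ (Rmult_le_pos _ _ (Rabs_pos _) (Rabs_pos _)) (Rmult_le_pos _ _ (pow_le y K ltac:(lra)) (Rlt_le _ _ (exp_pos (- x ^ 2)))) E1 E2).
  apply Rle_trans with (Ba * Bb * y ^ K / (sk a * sk b) * exp (- x ^ 2)).
  - apply Rmult_le_compat_r. left; apply exp_pos. unfold Rdiv. apply Rmult_le_compat_r.
    left; apply Rinv_0_lt_compat; nra. auto.
  - apply Rle_trans with (Ba * Bb / (sk a * sk b) * (y ^ K * exp (- x ^ 2))).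
    right; field; nra.
    replace (Ba * Bb / (sk a * sk b) * (INR (S K) ^ S K * exp 1) / y) with
      (Ba * Bb / (sk a * sk b) * (INR (S K) ^ S K * exp 1 / y)) by (field; nra).
    apply Rmult_le_compat_l; auto. apply Rdiv_le_0_compat; nra.
Qed.

Lemma decay_cv (f : R -> R) C : 0 <= C -> (forall x, Rabs (f x) <= C / (1 + x ^ 2)) ->
  Un_cv (fun m => f (INR m)) 0 /\ Un_cv (fun m => f (- INR m)) 0.
Proof.
  intros HC H.
  assert (G : forall eps, eps > 0 -> exists N, forall n, (n >= N)%nat -> C / (1 + INR n ^ 2) < eps).
  { intros eps Heps. destruct (INR_unbounded (C / eps)) as [N HN]. exists N. intros n Hn.
    apply le_INR in Hn. set (r := INR n) in *.
    assert (Hr : C < eps * r).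
    { apply Rmult_lt_reg_r with (/ eps). apply Rinv_0_lt_compat; lra.
      replace (eps * r * / eps) with r by (field; lra). unfold Rdiv in HN. lra. }
    assert (H1 : r < 1 + r ^ 2) by (pose proof (pow2_ge_0 (r - 1/2)); simpl in *; nra).
    apply Rmult_lt_reg_r with (1 + r ^ 2). pose proof (pow2_ge_0 r); lra.
    replace (C / (1 + r ^ 2) * (1 + r ^ 2)) with C by (field; pose proof (pow2_ge_0 r); lra).
    assert (0 <= r) by (apply pos_INR). nra. }
  split; intros eps Heps; destruct (G eps Heps) as [N HN]; exists N; intros n Hn;
    unfold R_dist; rewrite Rminus_0_r.
  - eapply Rle_lt_trans; [apply H|]. auto.
  - eapply Rle_lt_trans; [apply H|]. replace ((- INR n) ^ 2) with (INR n ^ 2) by ring. auto.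
Qed.

Lemma hh_boundary a b : Un_cv (fun m => hh a b (INR m) - hh a b (- INR m)) 0.
Proof.
  destruct (hh_decay a b) as [C [HC H]].
  destruct (decay_cv _ _ HC H) as [H1 H2].
  replace 0 with (0 - 0) by ring. apply CV_minus; auto.
Qed.

Definition I (m a b : nat) : R := RI (hh a b) (- INR m) (INR m).

Lemma I_RInt m a b : I m a b = RInt (hh a b) (- INR m) (INR m).
Proof. apply RI_RInt, hh_exRInt. Qed.

Lemma hh_sym a b : hh a b = hh b a.
Proof. apply functional_extensionality; intros; unfold hh; ring. Qed.

Lemma I_sym m a b : I m a b = I m b a.
Proof. unfold I; rewrite hh_sym; reflexivity. Qed.

Lemma hh_deriv a b x : derivable_pt_lim (hh a b) x
  (2 * cm b * hh a (pred b) x - 2 * cp a * hh (S a) b x).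
Proof.
  unfold hh.
  replace (2 * cm b * (hermite a x * hermite (pred b) x) - 2 * cp a * (hermite (S a) x * hermite b x))
    with ((cm a * hermite (pred a) x - cp a * hermite (S a) x) * hermite b x +
          hermite a x * (cm b * hermite (pred b) x - cp b * hermite (S b) x)).
  - apply (derivable_pt_lim_mult (hermite a) (hermite b)); apply hermite_deriv.
  - pose proof (x_hermite a x). pose proof (x_hermite b x). 
    transitivity ((cm a * hermite (pred a) x + cp a * hermite (S a) x) * hermite b x
       - 2 * cp a * hermite (S a) x * hermite b x
       + hermite a x * (2 * cm b * hermite (pred b) x) - hermite a x * (cm b * hermite (pred b) x + cp b * hermite (S b) x)); [ring|].
    rewrite <- H, <- H0. ring.
Qed.

Lemma I_rec m a b : 2 * cp a * I m (S a) b =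
  2 * cm b * I m a (pred b) - (hh a b (INR m) - hh a b (- INR m)).
Proof.
  rewrite !I_RInt.
  assert (D : is_RInt (fun x => 2 * cm b * hh a (pred b) x - 2 * cp a * hh (S a) b x)
                (- INR m) (INR m) (minus (hh a b (INR m)) (hh a b (- INR m)))).
  { apply (is_RInt_derive (V:=R_CompleteNormedModule) (hh a b)).
    - intros; apply is_derive_Reals, hh_deriv.
    - intros x _. apply (continuous_minus (V:=R_NormedModule)).
      apply (continuous_scal_r (V:=R_NormedModule)). apply hh_cont.
      apply (continuous_scal_r (V:=R_NormedModule)). apply hh_cont. }
  assert (D2 : is_RInt (fun x => 2 * cm b * hh a (pred b) x - 2 * cp a * hh (S a) b x)
                (- INR m) (INR m) (2 * cm b * RInt (hh a (pred b)) (- INR m) (INR m)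
                                   - 2 * cp a * RInt (hh (S a) b) (- INR m) (INR m))).
  { apply (is_RInt_minus (V:=R_NormedModule)); apply (is_RInt_scal (V:=R_NormedModule));
      apply (RInt_correct (V:=R_CompleteNormedModule)); apply hh_exRInt. }
  pose proof (is_RInt_unique _ _ _ _ D) as E1. pose proof (is_RInt_unique _ _ _ _ D2) as E2.
  rewrite E1 in E2. unfold minus, plus, opp in E2; simpl in E2. lra.
Qed.

Lemma cv_const c : Un_cv (fun _ => c) c.
Proof. intros eps H; exists 0%nat; intros; unfold R_dist; rewrite Rminus_eq_0, Rabs_R0; lra. Qed.

Lemma cv_scal k u l : Un_cv u l -> Un_cv (fun m => k * u m) (k * l).
Proof. intros; apply CV_mult; auto; apply cv_const. Qed.

Lemma cv_ext u v l : (forall m, u m = v m) -> Un_cv u l -> Un_cv v l.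
Proof. intros E H eps He; destruct (H eps He) as [N HN]; exists N; intros; rewrite <- E; auto. Qed.

Lemma cv_ext_l u l l' : l = l' -> Un_cv u l -> Un_cv u l'.
Proof. intros ->; auto. Qed.

Lemma I_S_expr m a b : I m (S a) b =
  / (2 * cp a) * (2 * cm b * I m a (pred b) - (hh a b (INR m) - hh a b (- INR m))).
Proof. rewrite <- I_rec. pose proof (cp_pos a). field. lra. Qed.

Lemma I_S0_cv a : Un_cv (fun m => I m (S a) 0) 0.
Proof.
  apply cv_ext with (fun m => / (2 * cp a) * (2 * cm 0 * I m a 0 - (hh a 0 (INR m) - hh a 0 (- INR m)))).
  { intros; rewrite I_S_expr; reflexivity. }
  unfold cm. simpl INR. replace (0/2) with 0 by field. rewrite sqrt_0.
  apply cv_ext_l with (/ (2 * cp a) * (0 - 0)). ring.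
  apply cv_scal. apply cv_ext with (fun m => 0 - (hh a 0 (INR m) - hh a 0 (- INR m))).
  intros; ring. apply CV_minus. apply cv_const. apply hh_boundary.
Qed.

Lemma I_S_cv a b L : Un_cv (fun m => I m a (pred b)) L ->
  Un_cv (fun m => I m (S a) b) (/ (2 * cp a) * (2 * cm b * L)).
Proof.
  intros H.
  apply cv_ext with (fun m => / (2 * cp a) * (2 * cm b * I m a (pred b) - (hh a b (INR m) - hh a b (- INR m)))).
  { intros; rewrite I_S_expr; reflexivity. }
  apply cv_scal. apply cv_ext_l with (2 * cm b * L - 0). ring.
  apply CV_minus. apply cv_scal; auto. apply hh_boundary.
Qed.

Lemma I_cv G : Un_cv (fun m => I m 0 0) G ->
  forall a b, Un_cv (fun m => I m a b) (if Nat.eqb a b then G else 0).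
Proof.
  intros HG a. induction a as [|a IH]; intros b.
  - destruct b as [|b]. simpl; auto.
    simpl. apply cv_ext with (fun m => I m (S b) 0). intros; apply I_sym. apply I_S0_cv.
  - destruct b as [|b]. simpl. apply I_S0_cv.
    apply cv_ext_l with (/ (2 * cp a) * (2 * cm (S b) * (if Nat.eqb a b then G else 0))).
    + rewrite cm_S. simpl Nat.eqb. destruct (Nat.eqb_spec a b).
      * subst. pose proof (cp_pos b). field. lra.
      * ring.
    + apply I_S_cv. simpl pred. apply IH.
Qed.

Lemma hh00_nonneg x : 0 <= hh 0 0 x.
Proof. unfold hh. apply Rle_0_sqr. Qed.

Lemma atan_RInt m : RInt (fun x => / (1 + x ^ 2)) (- INR m) (INR m) = atan (INR m) - atan (- INR m).
Proof.
  apply is_RInt_unique.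
  apply (is_RInt_derive (V:=R_CompleteNormedModule) atan).
  - intros; apply is_derive_Reals, derivable_pt_lim_atan.
  - intros x _. apply continuity_pt_filterlim.
    apply continuity_pt_inv. apply continuity_pt_plus. apply continuity_pt_const; intros ? ?; auto.
    apply derivable_continuous_pt. apply derivable_pt_pow.
    pose proof (pow2_ge_0 x); lra.
Qed.

Lemma I00_conv : exists G, 0 <= G /\ Un_cv (fun m => I m 0 0) G.
Proof.
  destruct (hh_decay 0 0) as [C [HC H]].
  assert (Hg : Un_growing (fun m => I m 0 0)).
  { intros m. rewrite !I_RInt. rewrite S_INR.
    rewrite <- (RInt_Chasles (V:=R_CompleteNormedModule) (hh 0 0) (- (INR m + 1)) (- INR m) (INR m + 1)) by apply hh_exRInt.
    rewrite <- (RInt_Chasles (V:=R_CompleteNormedModule) (hh 0 0) (- INR m) (INR m) (INR m + 1)) by apply hh_exRInt.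
    unfold plus; simpl.
    assert (0 <= RInt (hh 0 0) (- (INR m + 1)) (- INR m)).
    { apply RInt_ge_0. lra. apply hh_exRInt. intros; apply hh00_nonneg. }
    assert (0 <= RInt (hh 0 0) (INR m) (INR m + 1)).
    { apply RInt_ge_0. lra. apply hh_exRInt. intros; apply hh00_nonneg. }
    lra. }
  assert (Hb : has_ub (fun m => I m 0 0)).
  { exists (C * PI). intros y [m ->]. rewrite I_RInt.
    pose proof (pos_INR m).
    apply Rle_trans with (RInt (fun x => C * / (1 + x ^ 2)) (- INR m) (INR m)).
    - apply RInt_le. lra. apply hh_exRInt.
      apply (ex_RInt_continuous (V:=R_CompleteNormedModule)). intros x _.
      apply continuity_pt_filterlim. apply continuity_pt_mult. apply continuity_pt_const; intros ? ?; auto.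
      apply continuity_pt_inv. apply continuity_pt_plus. apply continuity_pt_const; intros ? ?; auto.
      apply derivable_continuous_pt. apply derivable_pt_pow.
      pose proof (pow2_ge_0 x); lra.
      intros x _. eapply Rle_trans. apply Rle_abs. apply H.
    - rewrite (RInt_scal (V:=R_CompleteNormedModule) (fun x => / (1 + x ^ 2))).
      unfold scal; simpl; unfold mult; simpl. rewrite atan_RInt.
      pose proof (atan_bound (INR m)). pose proof (atan_bound (- INR m)).
      apply Rmult_le_compat_l; auto. lra.
      apply (ex_RInt_continuous (V:=R_CompleteNormedModule)). intros x _.
      apply continuity_pt_filterlim.
      apply continuity_pt_inv. apply continuity_pt_plus. apply continuity_pt_const; intros ? ?; auto.
      apply derivable_continuous_pt. apply derivable_pt_pow.
      pose proof (pow2_ge_0 x); lra. }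
  destruct (growing_cv _ Hg Hb) as [G HG]. exists G. split; auto.
  apply Rle_cv_lim with (fun _ => 0) (fun m => I m 0 0); auto.
  intros m. rewrite I_RInt. apply RInt_ge_0. pose proof (pos_INR m); lra. apply hh_exRInt.
  intros; apply hh00_nonneg. apply cv_const.
Qed.

Definition sumL {A : Type} (f : A -> R) (l : list A) : R :=
  fold_right (fun p acc => f p + acc) 0 l.

Lemma sumL_ext {A} (f g : A -> R) l : (forall p, In p l -> f p = g p) -> sumL f l = sumL g l.
Proof.
  induction l as [|p l IH]; simpl; intros H; auto.
  rewrite H by auto. rewrite IH; auto.
Qed.

Lemma sumL_app {A} (f : A -> R) l1 l2 : sumL f (l1 ++ l2) = sumL f l1 + sumL f l2.
Proof. induction l1; simpl; [ring|]. rewrite IHl1; ring. Qed.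

Lemma sumL_map {A B} (f : B -> R) (g : A -> B) l : sumL f (map g l) = sumL (fun p => f (g p)) l.
Proof. induction l; simpl; auto. rewrite IHl; auto. Qed.

Lemma sumL_flat_map {A B} (f : B -> R) (g : A -> list B) l :
  sumL f (flat_map g l) = sumL (fun p => sumL f (g p)) l.
Proof. induction l; simpl; auto. rewrite sumL_app, IHl; auto. Qed.

Lemma sumL_plus {A} (f g : A -> R) l : sumL (fun p => f p + g p) l = sumL f l + sumL g l.
Proof. induction l; simpl; [ring|]. rewrite IHl; ring. Qed.

Lemma sumL_scal {A} (f : A -> R) k l : sumL (fun p => k * f p) l = k * sumL f l.
Proof. induction l; simpl; [ring|]. rewrite IHl; ring. Qed.

Lemma sumL_scal_r {A} (f : A -> R) k l : sumL (fun p => f p * k) l = sumL f l * k.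
Proof. induction l; simpl; [ring|]. rewrite IHl; ring. Qed.

Lemma sumL_zero {A} (l : list A) : sumL (fun _ => 0) l = 0.
Proof. induction l; simpl; auto. rewrite IHl; ring. Qed.

Lemma sumL_mult {A B} (f : A -> R) (g : B -> R) l1 l2 :
  sumL f l1 * sumL g l2 = sumL (fun p => sumL (fun q => f p * g q) l2) l1.
Proof.
  induction l1; simpl; [ring|]. rewrite <- IHl1, sumL_scal. ring.
Qed.

Lemma sumL_swap {A B} (f : A -> B -> R) l1 l2 :
  sumL (fun p => sumL (fun q => f p q) l2) l1 = sumL (fun q => sumL (fun p => f p q) l1) l2.
Proof.
  induction l1; simpl. rewrite sumL_zero; auto.
  rewrite IHl1. rewrite <- sumL_plus. auto.
Qed.

Lemma sumL_cv {A} (u : A -> nat -> R) (L : A -> R) l :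
  (forall p, In p l -> Un_cv (u p) (L p)) -> Un_cv (fun m => sumL (fun p => u p m) l) (sumL L l).
Proof.
  induction l as [|p l IH]; simpl; intros H. apply cv_const.
  apply CV_plus; auto.
Qed.

Lemma lim_eq u l : Un_cv u l -> Defs.lim u = l.
Proof.
  intros H. unfold Defs.lim. destruct (excluded_middle_informative _) as [H1|H1].
  - destruct (constructive_indefinite_description _ _) as [l' Hl']; simpl.
    eapply UL_sequence; eauto.
  - exfalso; apply H1; eauto.
Qed.

Lemma is_RInt_sum {A} (k : A -> R) (a b : A -> nat) T u v :
  is_RInt (fun t => sumL (fun p => k p * hh (a p) (b p) t) T) u v
          (sumL (fun p => k p * RInt (hh (a p) (b p)) u v) T).
Proof.
  induction T as [|p T IH]; simpl.
  - apply (is_RInt_ext (V:=R_NormedModule) (fun _ => 0)). intros; auto.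
    pose proof (is_RInt_const (V:=R_NormedModule) u v 0) as H.
    replace (scal (v - u) (0:R_NormedModule)) with 0 in H by (unfold scal; simpl; unfold mult; simpl; ring).
    exact H.
  - apply (is_RInt_plus (V:=R_NormedModule)); auto.
    apply (is_RInt_scal (V:=R_NormedModule)).
    apply (RInt_correct (V:=R_CompleteNormedModule)). apply hh_exRInt.
Qed.

Lemma RI_sum {A} (k : A -> R) (a b : A -> nat) T u v :
  RI (fun t => sumL (fun p => k p * hh (a p) (b p) t) T) u v
   = sumL (fun p => k p * RI (hh (a p) (b p)) u v) T.
Proof.
  pose proof (is_RInt_sum k a b T u v) as H.
  rewrite RI_RInt by (eexists; eauto).
  rewrite (is_RInt_unique _ _ _ _ H).
  apply sumL_ext; intros. rewrite RI_RInt; auto. apply hh_exRInt.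
Qed.

Fixpoint Pn (n m : nat) (a g : nat -> nat) : R :=
  match n with O => 1 | S n' => Pn n' m a g * I m (a n') (g n') end.

Lemma upd_same x j t : upd x j t j = t.
Proof. unfold upd. rewrite Nat.eqb_refl. auto. Qed.

Lemma upd_other x j t i : i <> j -> upd x j t i = x i.
Proof. intros H. unfold upd. destruct (Nat.eqb_spec i j); auto; lia. Qed.

Lemma Phi_upd_indep n a x j t : (n <= j)%nat -> Phi n a (upd x j t) = Phi n a x.
Proof.
  induction n; simpl; intros H; auto. rewrite IHn by lia. rewrite upd_other by lia. auto.
Qed.

Definition Term := (((nat -> R) -> R) * (nat -> nat) * (nat -> nat))%type.

Lemma box_prod n m (T : list Term) x :
  (forall p, In p T -> forall y j t, (j < n)%nat -> fst (fst p) (upd y j t) = fst (fst p) y) ->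
  box_int n m (fun y => sumL (fun p => fst (fst p) y * (Phi n (snd (fst p)) y * Phi n (snd p) y)) T) x
  = sumL (fun p => fst (fst p) x * Pn n m (snd (fst p)) (snd p)) T.
Proof.
  revert T x. induction n as [|n IH]; intros T x HT.
  - simpl. apply sumL_ext; intros; ring.
  - match goal with |- box_int (S n) m ?F x = _ =>
      change (box_int (S n) m F x) with (RI (fun t => box_int n m F (upd x n t)) (- INR m) (INR m)) end.
    set (T' := map (fun p : Term => ((fun y => fst (fst p) y * hermite (snd (fst p) n) (y n) * hermite (snd p n) (y n)),
                                      snd (fst p), snd p) : Term) T).
    assert (EF : (fun y => sumL (fun p => fst (fst p) y * (Phi (S n) (snd (fst p)) y * Phi (S n) (snd p) y)) T)
               = (fun y => sumL (fun p => fst (fst p) y * (Phi n (snd (fst p)) y * Phi n (snd p) y)) T')).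
    { apply functional_extensionality; intros y. unfold T'. rewrite sumL_map.
      apply sumL_ext; intros p _. simpl. ring. }
    rewrite EF.
    assert (Ein : forall t, box_int n m (fun y => sumL (fun p => fst (fst p) y * (Phi n (snd (fst p)) y * Phi n (snd p) y)) T') (upd x n t)
       = sumL (fun p => (fst (fst p) x * Pn n m (snd (fst p)) (snd p)) * hh (snd (fst p) n) (snd p n) t) T).
    { intros t. rewrite IH.
      - unfold T'. rewrite sumL_map. apply sumL_ext; intros p Hp. simpl.
        rewrite upd_same. rewrite (HT p Hp x n t) by lia. unfold hh. ring.
      - unfold T'. intros p Hp y j t' Hj. apply in_map_iff in Hp. destruct Hp as [q [<- Hq]].
        simpl. rewrite (HT q Hq) by lia. rewrite upd_other by lia. auto. }
    rewrite (functional_extensionality _ _ Ein).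
    rewrite (RI_sum (fun p : Term => fst (fst p) x * Pn n m (snd (fst p)) (snd p)) (fun p : Term => snd (fst p) n) (fun p : Term => snd p n)).
    apply sumL_ext; intros p _. simpl. fold (I m (snd (fst p) n) (snd p n)). ring.
Qed.

Fixpoint eqn (n : nat) (a g : nat -> nat) : bool :=
  match n with O => true | S n' => andb (eqn n' a g) (Nat.eqb (a n') (g n')) end.

Definition indb (b : bool) : R := if b then 1 else 0.

Lemma Pn_cv G : Un_cv (fun m => I m 0 0) G ->
  forall n a g, Un_cv (fun m => Pn n m a g) (indb (eqn n a g) * G ^ n).
Proof.
  intros HG n a g. induction n as [|n IH]; simpl.
  - replace (1 * 1) with 1 by ring. apply cv_const.
  - apply cv_ext_l with ((indb (eqn n a g) * G ^ n) * (if Nat.eqb (a n) (g n) then G else 0)).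
    + unfold indb. destruct (eqn n a g), (Nat.eqb (a n) (g n)); simpl; ring.
    + apply CV_mult; auto. apply I_cv; auto.
Qed.

Definition wq (p q : R * R * (nat -> nat)) : R :=
  fst (fst p) * fst (fst q) + snd (fst p) * snd (fst q).

Definition Sq (n : nat) (l : list (R * R * (nat -> nat))) : R :=
  sumL (fun p => sumL (fun q => wq p q * indb (eqn n (snd p) (snd q))) l) l.

Definition Tl (l : list (R * R * (nat -> nat))) : list Term :=
  flat_map (fun p => map (fun q => ((fun _ : nat -> R => wq p q), snd p, snd q) : Term) l) l.

Lemma combo_re_sum n l x : combo_re n l x = sumL (fun p => fst (fst p) * Phi n (snd p) x) l.
Proof. reflexivity. Qed.
Lemma combo_im_sum n l x : combo_im n l x = sumL (fun p => snd (fst p) * Phi n (snd p) x) l.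
Proof. reflexivity. Qed.

Lemma integrand_eq n l :
  (fun x => combo_re n l x ^ 2 + combo_im n l x ^ 2) =
  (fun y => sumL (fun p : Term => fst (fst p) y * (Phi n (snd (fst p)) y * Phi n (snd p) y)) (Tl l)).
Proof.
  apply functional_extensionality; intros x.
  unfold Tl. rewrite sumL_flat_map. rewrite combo_re_sum, combo_im_sum.
  cbn [pow]. rewrite !Rmult_1_r. rewrite !sumL_mult. rewrite <- sumL_plus.
  apply sumL_ext; intros p _. rewrite <- sumL_plus. rewrite sumL_map.
  apply sumL_ext; intros q _. simpl. unfold wq. ring.
Qed.

Lemma L2norm_eq : exists G, 0 <= G /\ forall n l,
  L2norm n (combo_re n l) (combo_im n l) = sqrt (G ^ n * Sq n l).
Proof.
  destruct I00_conv as [G [HG0 HG]]. exists G. split; auto. intros n l.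
  unfold L2norm, Lint. f_equal. rewrite integrand_eq.
  apply lim_eq.
  apply cv_ext with (fun m => sumL (fun p : Term => fst (fst p) (fun _ => 0) * Pn n m (snd (fst p)) (snd p)) (Tl l)).
  { intros m. rewrite box_prod; auto. unfold Tl. intros p Hp y j t _.
    apply in_flat_map in Hp. destruct Hp as [p' [_ Hp']]. apply in_map_iff in Hp'.
    destruct Hp' as [q [<- _]]. reflexivity. }
  unfold Tl. apply cv_ext_l with (sumL (fun p => sumL (fun q => wq p q * (indb (eqn n (snd p) (snd q)) * G ^ n)) l) l).
  { unfold Sq. rewrite <- sumL_scal. apply sumL_ext; intros p _. rewrite <- sumL_scal.
    apply sumL_ext; intros q _. ring. }
  apply cv_ext with (fun m => sumL (fun p => sumL (fun q => wq p q * Pn n m (snd p) (snd q)) l) l).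
  { intros m. rewrite sumL_flat_map. apply sumL_ext; intros p _. rewrite sumL_map. reflexivity. }
  apply (sumL_cv (fun p m => sumL (fun q => wq p q * Pn n m (snd p) (snd q)) l)). intros p _.
  apply (sumL_cv (fun q m => wq p q * Pn n m (snd p) (snd q))). intros q _.
  apply cv_scal. apply Pn_cv; auto.
Qed.

Definition updn (a : nat -> nat) (j v : nat) : nat -> nat :=
  fun i => if Nat.eqb i j then v else a i.

Fixpoint Kj (n : nat) (a : nat -> nat) (y : nat -> R) (j : nat) : R :=
  match n with O => 1 | S n' => Kj n' a y j * (if Nat.eqb n' j then 1 else hermite (a n') (y n')) end.

Lemma Phi_dep n a a' y y' : (forall i, (i < n)%nat -> a i = a' i) -> (forall i, (i < n)%nat -> y i = y' i) ->
  Phi n a y = Phi n a' y'.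
Proof.
  induction n; simpl; intros Ha Hy; auto.
  rewrite IHn by (intros; auto with arith). rewrite Ha, Hy by lia. auto.
Qed.

Lemma Kj_ge n a y j : (n <= j)%nat -> Kj n a y j = Phi n a y.
Proof.
  induction n; simpl; intros H; auto. rewrite IHn by lia.
  destruct (Nat.eqb_spec n j); [lia|]. auto.
Qed.

Lemma Phi_split n a y j t v : (j < n)%nat ->
  Phi n (updn a j v) (upd y j t) = Kj n a y j * hermite v t.
Proof.
  induction n; intros H; [lia|]. simpl.
  destruct (Nat.eqb_spec n j) as [->|Hne].
  - rewrite Kj_ge by lia. replace (updn a j v j) with v by (unfold updn; rewrite Nat.eqb_refl; auto). rewrite upd_same.
    rewrite (Phi_dep j (updn a j v) a (upd y j t) y). ring.
    + intros i Hi. unfold updn. destruct (Nat.eqb_spec i j); [lia|auto].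
    + intros i Hi. apply upd_other. lia.
  - rewrite IHn by lia. replace (updn a j v n) with (a n) by (unfold updn; destruct (Nat.eqb_spec n j); [lia|auto]).
    rewrite upd_other by auto. ring.
Qed.

Lemma updn_id a j : updn a j (a j) = a.
Proof. apply functional_extensionality; intros i. unfold updn. destruct (Nat.eqb_spec i j); subst; auto. Qed.

Lemma upd_id y j : upd y j (y j) = y.
Proof. apply functional_extensionality; intros i. unfold upd. destruct (Nat.eqb_spec i j); subst; auto. Qed.

Definition comboG (c : R * R -> R) (n : nat) (l : list (R * R * (nat -> nat))) (x : nat -> R) : R :=
  sumL (fun p => c (fst p) * Phi n (snd p) x) l.

Definition dl (j : nat) (l : list (R * R * (nat -> nat))) : list (R * R * (nat -> nat)) :=
  map (fun p => (cm (snd p j) * fst (fst p), cm (snd p j) * snd (fst p), updn (snd p) j (pred (snd p j)))) l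
  ++ map (fun p => (- cp (snd p j) * fst (fst p), - cp (snd p j) * snd (fst p), updn (snd p) j (S (snd p j)))) l.

Definition linc (c : R * R -> R) := forall k a b, c (k * a, k * b) = k * c (a, b).

Lemma pderiv_combo c n j l : linc c -> (j < n)%nat ->
  pderiv j (comboG c n l) = comboG c n (dl j l).
Proof.
  intros Hc Hj. apply functional_extensionality; intros x. unfold pderiv.
  apply deriv_eq.
  assert (E : (fun t => comboG c n l (upd x j t)) =
              (fun t => sumL (fun p => c (fst p) * Kj n (snd p) x j * hermite (snd p j) t) l)).
  { apply functional_extensionality; intros t. unfold comboG. apply sumL_ext; intros p _.
    rewrite Rmult_assoc, <- (Phi_split n (snd p) x j t (snd p j) Hj). rewrite updn_id. ring. }
  rewrite E.
  assert (D : forall l' : list (R * R * (nat -> nat)), derivable_pt_lim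
     (fun t => sumL (fun p => c (fst p) * Kj n (snd p) x j * hermite (snd p j) t) l') (x j)
     (sumL (fun p => c (fst p) * Kj n (snd p) x j *
        (cm (snd p j) * hermite (pred (snd p j)) (x j) - cp (snd p j) * hermite (S (snd p j)) (x j))) l')).
  { induction l' as [|p l' IH]; simpl.
    - apply derivable_pt_lim_const.
    - apply (derivable_pt_lim_plus (fun t => c (fst p) * Kj n (snd p) x j * hermite (snd p j) t)).
      + apply derivable_pt_lim_scal. apply hermite_deriv.
      + apply IH. }
  replace (comboG c n (dl j l) x) with
    (sumL (fun p => c (fst p) * Kj n (snd p) x j *
        (cm (snd p j) * hermite (pred (snd p j)) (x j) - cp (snd p j) * hermite (S (snd p j)) (x j))) l).
  apply D.
  unfold comboG, dl. rewrite sumL_app, !sumL_map. rewrite <- sumL_plus. apply sumL_ext; intros p _.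
  destruct p as [[a b] al]. simpl. rewrite !Hc.
  pose proof (Phi_split n al x j (x j) (pred (al j)) Hj) as H1.
  pose proof (Phi_split n al x j (x j) (S (al j)) Hj) as H2. rewrite upd_id in H1, H2.
  rewrite H1, H2. ring.
Qed.

Lemma pderiv_iter_combo c n j k l : linc c -> (j < n)%nat ->
  pderiv_iter j k (comboG c n l) = comboG c n (Nat.iter k (dl j) l).
Proof.
  intros Hc Hj. induction k; simpl; auto. rewrite IHk. apply pderiv_combo; auto.
Qed.

Fixpoint Dm (k : nat) (b : nat -> nat) (l : list (R * R * (nat -> nat))) : list (R * R * (nat -> nat)) :=
  match k with O => l | S k' => Dm k' b (Nat.iter (b k') (dl k') l) end.

Lemma dmulti_combo c n k b l : linc c -> (k <= n)%nat ->
  dmulti k b (comboG c n l) = comboG c n (Dm k b l).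
Proof.
  intros Hc. revert l. induction k; intros l Hk; simpl; auto.
  rewrite pderiv_iter_combo by (auto; lia). apply IHk. lia.
Qed.

Lemma linc_fst : linc fst. Proof. intros k a b; reflexivity. Qed.
Lemma linc_snd : linc snd. Proof. intros k a b; reflexivity. Qed.

Lemma rdiv_nn a b : 0 <= a -> 0 < b -> 0 <= a / b.
Proof. intros; unfold Rdiv; apply Rmult_le_pos; auto; left; apply Rinv_0_lt_compat; auto. Qed.

Lemma term_le_exp Z m : 0 <= Z -> Z ^ m / INR (fact m) <= exp Z.
Proof.
  intros HZ.
  set (s := fun i => / INR (fact i) * Z ^ i).
  assert (Hs : forall i, 0 <= s i).
  { intros i. unfold s. apply Rmult_le_pos. left; apply Rinv_0_lt_compat, lt_0_INR, lt_O_fact.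
    apply pow_le; auto. }
  assert (Hcv : Un_cv (fun n => sum_f_R0 s n) (exp Z)).
  { unfold exp. destruct (exist_exp Z) as [l Hl]. simpl. intros eps He.
    destruct (Hl eps He) as [N HN]. exists N. intros n Hn. apply HN. auto. }
  assert (Hg : Un_growing (fun n => sum_f_R0 s n)).
  { intros n. simpl. pose proof (Hs (S n)). lra. }
  pose proof (growing_ineq _ _ Hg Hcv m) as H.
  assert (s m <= sum_f_R0 s m).
  { destruct m; simpl. lra. 
    assert (0 <= sum_f_R0 s m).
    { clear H. induction m; simpl. apply Hs. pose proof (Hs (S m)). lra. }
    lra. }
  unfold s in *. unfold Rdiv. rewrite Rmult_comm. lra.
Qed.

Fixpoint PM (k : nat) (Z : R) : R :=
  match k with O => 1 | S k' => PM k' Z * Rmax 1 (Z / INR (S k')) end.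

Lemma PM_big k Z : INR k <= Z -> PM k Z = Z ^ k / INR (fact k).
Proof.
  induction k; intros H. simpl; field.
  cbn [PM]. rewrite IHk. 2: { rewrite S_INR in H. lra. }
  rewrite Rmax_right. 
  - rewrite fact_simpl, mult_INR. cbn [pow]. pose proof (lt_0_INR _ (lt_O_fact k)). pose proof (lt_0_INR (S k) ltac:(lia)).
    field. lra.
  - pose proof (lt_0_INR (S k) ltac:(lia)). apply Rmult_le_reg_r with (INR (S k)); auto.
    unfold Rdiv. rewrite Rmult_assoc, Rinv_l by lra. lra.
Qed.

Lemma PM_form k Z : 0 <= Z -> exists m, PM k Z = Z ^ m / INR (fact m).
Proof.
  intros HZ. induction k.
  - exists 0%nat. simpl. field.
  - destruct (Rle_dec (INR (S k)) Z) as [H|H].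
    + exists (S k). apply PM_big; auto.
    + destruct IHk as [m Hm]. exists m. simpl. rewrite Hm. rewrite Rmax_left. ring.
      pose proof (lt_0_INR (S k) ltac:(lia)). apply Rmult_le_reg_r with (INR (S k)); auto.
      unfold Rdiv. rewrite Rmult_assoc, Rinv_l by lra. lra.
Qed.

Lemma PM_le k Z : 0 <= Z -> PM k Z <= exp Z.
Proof. intros HZ. destruct (PM_form k Z HZ) as [m ->]. apply term_le_exp; auto. Qed.

Lemma PM_pos k Z : 0 < PM k Z.
Proof. induction k; simpl. lra. apply Rmult_lt_0_compat; auto. apply Rlt_le_trans with 1. lra. apply Rmax_l. Qed.

Fixpoint PP (M k : nat) : R :=
  match k with O => 1 | S k' => PP M k' * (2 * INR (M + k)) end.

Lemma PP_pos M k : 0 < PP M k.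
Proof. induction k; simpl. lra. apply Rmult_lt_0_compat; auto. pose proof (lt_0_INR (M + S k) ltac:(lia)). lra. Qed.

Lemma PP_bound N k delta : 0 < delta ->
  PP N k <= (2 * delta) ^ (2 * k) * (INR (fact k)) ^ 2 *
            (PM k (sqrt (INR N) / delta) ^ 2 * PM k (1 / delta ^ 2)).
Proof.
  intros Hd. set (Y := sqrt (INR N) / delta). set (X := 1 / delta ^ 2).
  induction k.
  - simpl. lra.
  - cbn [PP PM].
    replace ((2 * delta) ^ (2 * S k)) with ((2 * delta) ^ (2 * k) * (4 * delta ^ 2)).
    2: { replace (2 * S k)%nat with (S (S (2 * k))) by lia. simpl. ring. }
    rewrite fact_simpl, mult_INR.
    set (i := INR (S k)).
    assert (Hi : 0 < i) by (apply lt_0_INR; lia).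
    set (A := Rmax 1 (Y / i)). set (B := Rmax 1 (X / i)).
    assert (HA : 1 <= A) by apply Rmax_l. assert (HB : 1 <= B) by apply Rmax_l.
    assert (Key : 2 * INR (N + S k) <= 4 * delta ^ 2 * i ^ 2 * (A ^ 2 * B)).
    { assert (E : 2 * INR (N + S k) = 4 * delta ^ 2 * i ^ 2 * (((Y / i) ^ 2 + X / i) / 2)).
      { rewrite plus_INR. fold i. unfold Y, X. unfold Rdiv. rewrite Rpow_mult_distr.
        rewrite Rpow_mult_distr, pow2_sqrt by apply pos_INR. field. split; lra. }
      rewrite E. apply Rmult_le_compat_l. 
      { apply Rmult_le_pos. pose proof (pow2_ge_0 delta); lra. apply pow2_ge_0. }
      assert (U : (Y / i) ^ 2 <= A ^ 2).
      { assert (0 <= Y / i). { unfold Y. apply rdiv_nn; [|auto]. apply rdiv_nn; [apply sqrt_pos|auto]. }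
        apply pow_incr. split; auto. apply Rmax_r. }
      assert (V : X / i <= B) by apply Rmax_r.
      assert (A2 : 1 <= A ^ 2) by (simpl; nra).
      assert (0 <= X / i). { unfold X. apply rdiv_nn; [|auto]. apply rdiv_nn; [lra|]. apply pow_lt; auto. }
      nra. }
    assert (P1 : 0 <= PP N k) by (left; apply PP_pos).
    assert (P2 : 0 <= 2 * INR (N + S k)) by (pose proof (pos_INR (N + S k)); lra).
    pose proof (Rmult_le_compat _ _ _ _ P1 P2 IHk Key) as H.
    eapply Rle_trans; [exact H|]. right. fold Y X. fold A B. 
    ring.
Qed.

Lemma scalar_bound N k delta : 0 < delta <= 1 ->
  sqrt (PP N k) <= exp (exp 1 / (2 * delta ^ 2)) * (2 * delta) ^ k * INR (fact k) * exp (sqrt (INR N) / delta).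
Proof.
  intros [Hd Hd1]. set (Y := sqrt (INR N) / delta). set (X := 1 / delta ^ 2).
  assert (HY : 0 <= Y) by (unfold Y; apply rdiv_nn; [apply sqrt_pos|auto]).
  assert (HX : 0 <= X) by (unfold X; apply rdiv_nn; [lra|]; apply pow_lt; auto).
  pose proof (PP_bound N k delta Hd) as H. fold Y X in H.
  assert (H2 : PP N k <= ((2 * delta) ^ k * INR (fact k) * exp Y * exp (X / 2)) ^ 2).
  { eapply Rle_trans; [exact H|].
    replace (((2 * delta) ^ k * INR (fact k) * exp Y * exp (X / 2)) ^ 2) with
      ((2 * delta) ^ (2 * k) * INR (fact k) ^ 2 * (exp Y ^ 2 * exp X)).
    2: { rewrite Nat.mul_comm, pow_mult. replace (exp X) with (exp (X/2) ^ 2).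
         ring. simpl. rewrite Rmult_1_r, <- exp_plus. f_equal. field. }
    apply Rmult_le_compat_l. apply Rmult_le_pos. apply pow_le; lra. apply pow2_ge_0.
    apply Rmult_le_compat. apply pow2_ge_0. left; apply PM_pos.
    apply pow_incr. split. left; apply PM_pos. apply PM_le; auto.
    apply PM_le; auto. }
  apply Rle_trans with ((2 * delta) ^ k * INR (fact k) * exp Y * exp (X / 2)).
  - rewrite <- (sqrt_pow2 ((2 * delta) ^ k * INR (fact k) * exp Y * exp (X / 2))).
    apply sqrt_le_1_alt. auto.
    apply Rmult_le_pos. apply Rmult_le_pos. apply Rmult_le_pos. apply pow_le; lra. apply pos_INR.
    left; apply exp_pos. left; apply exp_pos.
  - assert (exp (X / 2) <= exp (exp 1 / (2 * delta ^ 2))).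
    { assert (X / 2 <= exp 1 / (2 * delta ^ 2)).
      { unfold X. assert (1 < exp 1) by (pose proof (exp_ineq1 1 ltac:(lra)); lra).
        assert (0 < delta ^ 2) by (apply pow_lt; auto).
        unfold Rdiv. rewrite Rmult_1_l. rewrite Rinv_mult.
        replace (/ delta ^ 2 * / 2) with (/ 2 * / delta ^ 2) by ring.
        rewrite <- Rmult_assoc. rewrite (Rmult_comm (exp 1)).
        apply Rmult_le_compat_r. left; apply Rinv_0_lt_compat; auto. lra. }
      destruct (Req_dec (X / 2) (exp 1 / (2 * delta ^ 2))) as [E|E]. rewrite E; lra.
      left. apply exp_increasing. lra. }
    assert (0 <= (2 * delta) ^ k * INR (fact k) * exp Y).
    { apply Rmult_le_pos. apply Rmult_le_pos. apply pow_le; lra. apply pos_INR. left; apply exp_pos. }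
    replace (exp (exp 1 / (2 * delta ^ 2)) * (2 * delta) ^ k * INR (fact k) * exp Y) with
      ((2 * delta) ^ k * INR (fact k) * exp Y * exp (exp 1 / (2 * delta ^ 2))) by ring.
    apply Rmult_le_compat_l; auto.
Qed.

Lemma eqn_spec n a g : eqn n a g = true <-> forall i, (i < n)%nat -> a i = g i.
Proof.
  induction n; simpl.
  - split; auto; intros; lia.
  - rewrite andb_true_iff, IHn, Nat.eqb_eq. split.
    + intros [H1 H2] i Hi. destruct (Nat.eq_dec i n); subst; auto. apply H1; lia.
    + intros H; split; auto.
Qed.

Lemma eqn_refl n a : eqn n a a = true.
Proof. apply eqn_spec; auto. Qed.

Lemma eqn_sym n a g : eqn n a g = eqn n g a.
Proof. apply eq_iff_eq_true. rewrite !eqn_spec. split; intros H i Hi; symmetry; auto. Qed.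

Lemma eqn_trans n a g h : eqn n a g = true -> eqn n g h = true -> eqn n a h = true.
Proof. rewrite !eqn_spec. intros H1 H2 i Hi. rewrite H1, H2; auto. Qed.

Definition Sw (n : nat) (w : (nat -> nat) -> R) (l : list (R * R * (nat -> nat))) : R :=
  sumL (fun p => sumL (fun q => wq p q * w (snd p) * indb (eqn n (snd p) (snd q))) l) l.

Lemma sumL_filter {A} (f : A -> R) (P : A -> bool) l :
  sumL f l = sumL f (filter P l) + sumL f (filter (fun x => negb (P x)) l).
Proof.
  induction l as [|x l IH]; simpl. ring. destruct (P x); simpl; rewrite IH; ring.
Qed.

Lemma filter_len {A} (P : A -> bool) l : (length (filter P l) <= length l)%nat.
Proof. induction l; simpl; auto. destruct (P a); simpl; lia. Qed.

Lemma sq_sum_nonneg (l : list (R * R * (nat -> nat))) :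
  0 <= sumL (fun p => sumL (fun q => wq p q) l) l.
Proof.
  replace (sumL (fun p => sumL (fun q => wq p q) l) l) with
    (sumL (fun p => fst (fst p)) l * sumL (fun p => fst (fst p)) l +
     sumL (fun p => snd (fst p)) l * sumL (fun p => snd (fst p)) l).
  - pose proof (Rle_0_sqr (sumL (fun p => fst (fst p)) l)).
    pose proof (Rle_0_sqr (sumL (fun p => snd (fst p)) l)). unfold Rsqr in *. lra.
  - rewrite !sumL_mult, <- sumL_plus. apply sumL_ext; intros p _. rewrite <- sumL_plus.
    apply sumL_ext; intros q _. unfold wq; ring.
Qed.

Lemma Sw_nonneg n w : forall l,
  (forall p, In p l -> 0 <= w (snd p)) ->
  (forall p q, In p l -> In q l -> eqn n (snd p) (snd q) = true -> w (snd p) = w (snd q)) ->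
  0 <= Sw n w l.
Proof.
  intros l. remember (length l) as L. revert l HeqL.
  induction L as [L IH] using lt_wf_ind. intros l HL Hw He.
  destruct l as [|p0 l'].
  - unfold Sw; simpl. lra.
  - set (l := p0 :: l') in *.
    set (P := fun q : R * R * (nat -> nat) => eqn n (snd p0) (snd q)).
    set (l1 := filter P l). set (l2 := filter (fun x => negb (P x)) l).
    assert (In1 : forall q, In q l1 -> In q l /\ P q = true) by (intros q; unfold l1; rewrite filter_In; auto).
    assert (In2 : forall q, In q l2 -> In q l /\ P q = false).
    { intros q; unfold l2; rewrite filter_In. intros [H1 H2]. split; auto. destruct (P q); auto. }
    assert (Hp0 : In p0 l) by (left; auto).
    assert (Split : Sw n w l = Sw n w l1 + Sw n w l2).
    { unfold Sw. rewrite (sumL_filter _ P l). fold l1 l2.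
      rewrite (sumL_ext _ (fun p => sumL (fun q => wq p q * w (snd p) * indb (eqn n (snd p) (snd q))) l1) l1).
      rewrite (sumL_ext _ (fun p => sumL (fun q => wq p q * w (snd p) * indb (eqn n (snd p) (snd q))) l2) l2).
      reflexivity.
      - intros p Hp. rewrite (sumL_filter _ P l). fold l1 l2.
        rewrite (sumL_ext _ (fun _ => 0) l1). rewrite sumL_zero. ring.
        intros q Hq. destruct (In2 p Hp) as [_ Pp]. destruct (In1 q Hq) as [_ Pq].
        destruct (eqn n (snd p) (snd q)) eqn:E; [|unfold indb; ring].
        exfalso. unfold P in *. rewrite eqn_sym in E. rewrite (eqn_trans _ _ _ _ Pq E) in Pp. discriminate.
      - intros p Hp. rewrite (sumL_filter _ P l). fold l1 l2.
        rewrite (sumL_ext _ (fun _ => 0) l2). rewrite sumL_zero. ring.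
        intros q Hq. destruct (In1 p Hp) as [_ Pp]. destruct (In2 q Hq) as [_ Pq].
        destruct (eqn n (snd p) (snd q)) eqn:E; [|unfold indb; ring].
        exfalso. unfold P in *. rewrite (eqn_trans _ _ _ _ Pp E) in Pq. discriminate. }
    rewrite Split. apply Rplus_le_le_0_compat.
    + unfold Sw. 
      rewrite (sumL_ext _ (fun p => w (snd p0) * sumL (fun q => wq p q) l1) l1).
      * rewrite sumL_scal. apply Rmult_le_pos. apply Hw; auto. apply sq_sum_nonneg.
      * intros p Hp. rewrite <- sumL_scal. apply sumL_ext; intros q Hq.
        destruct (In1 p Hp) as [Ip Pp]. destruct (In1 q Hq) as [Iq Pq]. unfold P in *.
        assert (E : eqn n (snd p) (snd q) = true).
        { rewrite eqn_sym in Pp. eapply eqn_trans; eauto. }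
        rewrite E. rewrite (He p0 p) by auto. unfold indb; ring.
    + apply (IH (length l2)).
      * rewrite HL. unfold l2, l. simpl. unfold P at 1. rewrite eqn_refl. simpl.
        pose proof (filter_len (fun x => negb (P x)) l'). lia.
      * auto.
      * intros p Hp. apply Hw. apply In2; auto.
      * intros p q Hp Hq. apply He; apply In2; auto.
Qed.

Lemma Sq_Sw n l : Sq n l = Sw n (fun _ => 1) l.
Proof. unfold Sq, Sw. apply sumL_ext; intros; apply sumL_ext; intros; ring. Qed.

Lemma Sq_nonneg n l : 0 <= Sq n l.
Proof. rewrite Sq_Sw. apply Sw_nonneg; intros; auto; lra. Qed.

Lemma Sw_lin n w1 w2 k1 k2 l :
  Sw n (fun a => k1 * w1 a + k2 * w2 a) l = k1 * Sw n w1 l + k2 * Sw n w2 l.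
Proof.
  unfold Sw. rewrite <- !sumL_scal, <- sumL_plus. apply sumL_ext; intros.
  rewrite <- !sumL_scal, <- sumL_plus. apply sumL_ext; intros. ring.
Qed.

Lemma Sw_mono n w1 w2 l :
  (forall p, In p l -> w1 (snd p) <= w2 (snd p)) ->
  (forall p q, In p l -> In q l -> eqn n (snd p) (snd q) = true -> w1 (snd p) = w1 (snd q)) ->
  (forall p q, In p l -> In q l -> eqn n (snd p) (snd q) = true -> w2 (snd p) = w2 (snd q)) ->
  Sw n w1 l <= Sw n w2 l.
Proof.
  intros H H1 H2.
  assert (0 <= Sw n (fun a => 1 * w2 a + (-1) * w1 a) l).
  { apply Sw_nonneg. intros p Hp; pose proof (H p Hp); lra.
    intros p q Hp Hq E. rewrite (H1 p q), (H2 p q); auto. }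
  rewrite Sw_lin in H0. lra.
Qed.

Definition Xq n (A B : list (R * R * (nat -> nat))) : R :=
  sumL (fun p => sumL (fun q => wq p q * indb (eqn n (snd p) (snd q))) B) A.

Lemma Sq_app n A B : Sq n (A ++ B) = Sq n A + Xq n A B + Xq n B A + Sq n B.
Proof.
  unfold Sq, Xq. rewrite sumL_app.
  rewrite (sumL_ext (fun p => sumL _ (A ++ B)) (fun p => sumL (fun q => wq p q * indb (eqn n (snd p) (snd q))) A + sumL (fun q => wq p q * indb (eqn n (snd p) (snd q))) B) A).
  rewrite (sumL_ext (fun p => sumL _ (A ++ B)) (fun p => sumL (fun q => wq p q * indb (eqn n (snd p) (snd q))) A + sumL (fun q => wq p q * indb (eqn n (snd p) (snd q))) B) B).
  rewrite !sumL_plus. ring.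
  all: intros; apply sumL_app.
Qed.

Definition negl (B : list (R * R * (nat -> nat))) :=
  map (fun p => (- fst (fst p), - snd (fst p), snd p)) B.

Lemma Sq_le_2 n A B : Sq n (A ++ B) <= 2 * Sq n A + 2 * Sq n B.
Proof.
  pose proof (Sq_nonneg n (A ++ negl B)) as H.
  rewrite !Sq_app in *.
  assert (E1 : Sq n (negl B) = Sq n B).
  { unfold Sq, negl. rewrite sumL_map. apply sumL_ext; intros. rewrite sumL_map. apply sumL_ext; intros.
    unfold wq; simpl; ring. }
  assert (E2 : Xq n A (negl B) + Xq n A B = 0).
  { unfold Xq, negl. rewrite <- sumL_plus. rewrite <- (sumL_zero A). apply sumL_ext; intros.
    rewrite sumL_map, <- sumL_plus. rewrite <- (sumL_zero B). apply sumL_ext; intros.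
    unfold wq; simpl; ring. }
  assert (E3 : Xq n (negl B) A + Xq n B A = 0).
  { unfold Xq, negl. rewrite sumL_map. rewrite <- sumL_plus. rewrite <- (sumL_zero B). apply sumL_ext; intros.
    rewrite <- sumL_plus. rewrite <- (sumL_zero A). apply sumL_ext; intros.
    unfold wq; simpl; ring. }
  rewrite E1 in H. lra.
Qed.

Lemma eqn_split n j a g : (j < n)%nat ->
  (eqn n a g = true <-> a j = g j /\ forall i, (i < n)%nat -> i <> j -> a i = g i).
Proof.
  intros Hj. rewrite eqn_spec. split.
  - intros H; split; auto.
  - intros [H1 H2] i Hi. destruct (Nat.eq_dec i j); subst; auto.
Qed.

Lemma eqn_updn n j a g u v : (j < n)%nat ->
  (eqn n (updn a j u) (updn g j v) = true <-> u = v /\ forall i, (i < n)%nat -> i <> j -> a i = g i).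
Proof.
  intros Hj. rewrite (eqn_split n j) by auto. unfold updn. rewrite Nat.eqb_refl. split.
  - intros [H1 H2]; split; auto. intros i Hi Hij. specialize (H2 i Hi Hij).
    destruct (Nat.eqb_spec i j); [lia|auto].
  - intros [H1 H2]; split; auto. intros i Hi Hij. destruct (Nat.eqb_spec i j); [lia|auto].
Qed.

Lemma tw_m n j a g : (j < n)%nat ->
  cm (a j) * cm (g j) * indb (eqn n (updn a j (pred (a j))) (updn g j (pred (g j))))
  = INR (a j) / 2 * indb (eqn n a g).
Proof.
  intros Hj. destruct (a j) as [|a'] eqn:Ea.
  - unfold cm. simpl INR. replace (0/2) with 0 by field. rewrite sqrt_0. ring.
  - destruct (g j) as [|g'] eqn:Eg.
    + unfold cm at 2. simpl INR. replace (0/2) with 0 by field. rewrite sqrt_0.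
      replace (eqn n a g) with false. unfold indb; ring.
      symmetry. apply not_true_iff_false. rewrite (eqn_split n j) by auto. rewrite Ea, Eg. intros [H _]; discriminate.
    + simpl pred.
      replace (eqn n (updn a j a') (updn g j g')) with (eqn n a g).
      * destruct (eqn n a g) eqn:E.
        -- apply (eqn_split n j) in E; auto. destruct E as [E _]. rewrite Ea, Eg in E. injection E as ->.
           unfold indb. rewrite cm_sq. ring.
        -- unfold indb; ring.
      * apply eq_iff_eq_true. rewrite (eqn_split n j), eqn_updn by auto. rewrite Ea, Eg.
        split; intros [H1 H2]; split; auto; lia.
Qed.

Lemma tw_p n j a g : (j < n)%nat ->
  cp (a j) * cp (g j) * indb (eqn n (updn a j (S (a j))) (updn g j (S (g j))))
  = INR (S (a j)) / 2 * indb (eqn n a g).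
Proof.
  intros Hj.
  replace (eqn n (updn a j (S (a j))) (updn g j (S (g j)))) with (eqn n a g).
  - destruct (eqn n a g) eqn:E.
    + apply (eqn_split n j) in E; auto. destruct E as [E _]. rewrite E.
      unfold indb. rewrite cp_sq. ring.
    + unfold indb; ring.
  - apply eq_iff_eq_true. rewrite (eqn_split n j), eqn_updn by auto.
    split; intros [H1 H2]; split; auto; lia.
Qed.

Lemma mabs_updn n j a v : (j < n)%nat -> (mabs n (updn a j v) + a j = mabs n a + v)%nat.
Proof.
  induction n; intros Hj; [lia|]. simpl.
  destruct (Nat.eq_dec j n) as [->|Hne].
  - unfold updn at 2. rewrite Nat.eqb_refl.
    assert (mabs n (updn a n v) = mabs n a).
    { clear IHn Hj. assert (forall k, (k <= n)%nat -> mabs k (updn a n v) = mabs k a).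
      { induction k; simpl; intros; auto. rewrite IHk by lia. unfold updn.
        destruct (Nat.eqb_spec k n); [lia|auto]. }
      auto. }
    lia.
  - unfold updn at 2. destruct (Nat.eqb_spec n j); [lia|]. specialize (IHn ltac:(lia)). lia.
Qed.

Lemma aj_le_mabs n j a : (j < n)%nat -> (a j <= mabs n a)%nat.
Proof. induction n; intros; simpl; [lia|]. destruct (Nat.eq_dec j n); subst; [lia|]. specialize (IHn ltac:(lia)); lia. Qed.

Lemma dl_EN n M j l : (j < n)%nat -> in_EN n M l -> in_EN n (S M) (dl j l).
Proof.
  intros Hj H. unfold in_EN, dl in *. rewrite Forall_forall in *. intros p Hp.
  apply in_app_or in Hp. destruct Hp as [Hp|Hp]; apply in_map_iff in Hp; destruct Hp as [q [<- Hq]];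
    simpl; specialize (H q Hq); simpl in H; pose proof (mabs_updn n j (snd q)); 
    [specialize (H0 (pred (snd q j)) Hj) | specialize (H0 (S (snd q j)) Hj)]; lia.
Qed.

Definition L1 j (l : list (R * R * (nat -> nat))) :=
  map (fun p => (cm (snd p j) * fst (fst p), cm (snd p j) * snd (fst p), updn (snd p) j (pred (snd p j)))) l.
Definition L2 j (l : list (R * R * (nat -> nat))) :=
  map (fun p => (- cp (snd p j) * fst (fst p), - cp (snd p j) * snd (fst p), updn (snd p) j (S (snd p j)))) l.

Lemma Sq_L1 n j l : (j < n)%nat -> Sq n (L1 j l) = Sw n (fun a => INR (a j) / 2) l.
Proof.
  intros Hj. unfold Sq, Sw, L1. rewrite sumL_map. apply sumL_ext; intros p _. rewrite sumL_map.
  apply sumL_ext; intros q _. cbn [fst snd]. 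
  rewrite Rmult_assoc, <- (tw_m n j (snd p) (snd q) Hj). unfold wq; simpl. ring.
Qed.

Lemma Sq_L2 n j l : (j < n)%nat -> Sq n (L2 j l) = Sw n (fun a => INR (S (a j)) / 2) l.
Proof.
  intros Hj. unfold Sq, Sw, L2. rewrite sumL_map. apply sumL_ext; intros p _. rewrite sumL_map.
  apply sumL_ext; intros q _. cbn [fst snd]. 
  rewrite Rmult_assoc, <- (tw_p n j (snd p) (snd q) Hj). unfold wq; simpl. ring.
Qed.

Lemma Sq_dl n M j l : (j < n)%nat -> in_EN n M l -> Sq n (dl j l) <= 2 * INR (S M) * Sq n l.
Proof.
  intros Hj HM. unfold dl. fold (L1 j l) (L2 j l).
  eapply Rle_trans. apply Sq_le_2. rewrite Sq_L1, Sq_L2 by auto.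
  rewrite Sq_Sw.
  assert (E : 2 * Sw n (fun a => INR (a j) / 2) l + 2 * Sw n (fun a => INR (S (a j)) / 2) l
            = Sw n (fun a => 2 * (INR (a j) / 2) + 2 * (INR (S (a j)) / 2)) l) by (rewrite Sw_lin; ring).
  rewrite E.
  replace (2 * INR (S M) * Sw n (fun _ => 1) l) with (Sw n (fun _ => 2 * INR (S M) * 1 + 0 * 0) l)
    by (rewrite (Sw_lin n (fun _ => 1) (fun _ => 0)); ring).
  apply Sw_mono.
  - intros p Hp. unfold in_EN in HM. rewrite Forall_forall in HM. specialize (HM p Hp).
    pose proof (aj_le_mabs n j (snd p) Hj). rewrite S_INR. 
    assert (INR (snd p j) <= INR M) by (apply le_INR; lia). rewrite S_INR. lra.
  - intros p q _ _ E'. apply (eqn_split n j) in E'; auto. destruct E' as [E' _]. rewrite E'. auto.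
  - auto.
Qed.

Lemma iter_EN n M j k l : (j < n)%nat -> in_EN n M l -> in_EN n (M + k) (Nat.iter k (dl j) l).
Proof.
  intros Hj H. induction k; simpl. rewrite Nat.add_0_r; auto.
  rewrite Nat.add_succ_r. apply dl_EN; auto.
Qed.


Lemma Sq_iter n M j k l : (j < n)%nat -> in_EN n M l ->
  Sq n (Nat.iter k (dl j) l) <= PP M k * Sq n l.
Proof.
  intros Hj H. induction k.
  - simpl. lra.
  - cbn [Nat.iter PP]. eapply Rle_trans. apply (Sq_dl n (M + k)); auto. apply iter_EN; auto.
    rewrite <- Nat.add_succ_r.
    assert (0 <= 2 * INR (M + S k)) by (pose proof (pos_INR (M + S k)); lra).
    replace (PP M k * (2 * INR (M + S k)) * Sq n l) with (2 * INR (M + S k) * (PP M k * Sq n l)) by ring.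
    apply Rmult_le_compat_l; auto.
Qed.

Lemma PP_add M a b : PP M a * PP (M + a) b = PP M (a + b).
Proof.
  induction b; cbn [PP]. rewrite Nat.add_0_r; ring.
  replace (a + S b)%nat with (S (a + b)) by lia. cbn [PP]. rewrite <- IHb.
  replace (M + a + S b)%nat with (M + S (a + b))%nat by lia. ring.
Qed.

Lemma Sq_Dm n k b : forall M l, (k <= n)%nat -> in_EN n M l ->
  Sq n (Dm k b l) <= PP M (mabs k b) * Sq n l /\ in_EN n (M + mabs k b) (Dm k b l).
Proof.
  induction k; intros M l Hk H.
  - simpl. split. lra. rewrite Nat.add_0_r; auto.
  - simpl. set (l' := Nat.iter (b k) (dl k) l).
    assert (H1 : in_EN n (M + b k) l') by (apply iter_EN; auto; lia).
    assert (H2 : Sq n l' <= PP M (b k) * Sq n l) by (apply Sq_iter; auto; lia).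
    destruct (IHk (M + b k)%nat l' ltac:(lia) H1) as [H3 H4]. split.
    + eapply Rle_trans; [exact H3|]. replace (mabs k b + b k)%nat with (b k + mabs k b)%nat by lia. rewrite <- PP_add.
      pose proof (PP_pos (M + b k) (mabs k b)).
      replace (PP M (b k) * PP (M + b k) (mabs k b) * Sq n l) with (PP (M + b k) (mabs k b) * (PP M (b k) * Sq n l)) by ring.
      apply Rmult_le_compat_l; lra.
    + replace (M + (mabs k b + b k))%nat with (M + b k + mabs k b)%nat by lia. auto.
Qed.

Theorem mainTheorem10 :
  forall (n N : nat) (l : list (R * R * (nat -> nat))),
    in_EN n N l ->
    forall (delta : R), 0 < delta <= 1 ->
    forall (beta : nat -> nat),
      L2norm n (dmulti n beta (combo_re n l)) (dmulti n beta (combo_im n l))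
      <= exp (exp 1 / (2 * delta ^ 2)) * (2 * delta) ^ (mabs n beta)
         * INR (fact (mabs n beta)) * exp (sqrt (INR N) / delta)
         * L2norm n (combo_re n l) (combo_im n l).
Proof.
  intros n N l HN delta Hd beta.
  change (combo_re n l) with (comboG fst n l).
  change (combo_im n l) with (comboG snd n l).
  rewrite !dmulti_combo by (auto using linc_fst, linc_snd).
  change (comboG fst n ?L) with (combo_re n L).
  change (comboG snd n ?L) with (combo_im n L).
  destruct L2norm_eq as [G [HG HL]]. rewrite !HL.
  destruct (Sq_Dm n n beta N l (le_n n) HN) as [HS _].
  pose proof (scalar_bound N (mabs n beta) delta Hd) as Hs.
  set (K := exp (exp 1 / (2 * delta ^ 2)) * (2 * delta) ^ mabs n beta * INR (fact (mabs n beta)) * exp (sqrt (INR N) / delta)) in *.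
  assert (HGn : 0 <= G ^ n) by (apply pow_le; auto).
  pose proof (Sq_nonneg n l). pose proof (PP_pos N (mabs n beta)).
  apply Rle_trans with (sqrt (PP N (mabs n beta)) * sqrt (G ^ n * Sq n l)).
  - rewrite <- sqrt_mult by (try lra; apply Rmult_le_pos; auto).
    apply sqrt_le_1_alt.
    replace (PP N (mabs n beta) * (G ^ n * Sq n l)) with (G ^ n * (PP N (mabs n beta) * Sq n l)) by ring.
    apply Rmult_le_compat_l; auto.
  - apply Rmult_le_compat_r. apply sqrt_pos. auto.
Qed.
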